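(* Let $L_5=\{-3,-2,-1,0,1\}$ with its natural linear order. Define the games $\star=\{-1\mid -3\}$, and for any game $G$: $\mathsf{M}(G)=\{1\mid G\}$, $\mathsf{P}(G)=\{G\mid -2\}$, $\mathsf{P}_\star(G)=\{G\mid \star\}$. For $n\in\mathbb{N}$ let $\mathsf{P}_n(G)=\mathsf{P}(G)$ if $n$ is odd and $\mathsf{P}_n(G)=\mathsf{P}_\star(G)$ if $n$ is even. Define $G_0=0$ (the atomic game $[0]$) and $G_{n+1}=\mathsf{M}(\mathsf{P}_n(G_n))$. Then for every $n\ge 0$, $G_n\le G_{n+1}$.
   Context: Games over a poset $A$ of atoms are defined inductively: for each $a\in A$, $[a]$ is a game (atomic; often written simply $a$); whenever $L,R$ are non-empty sets of games, $\{L\mid R\}$ is a game (composite), with left options the elements of $L$ and right options the elements of $R$; $\{G_1,\dots,G_n\mid H_1,\dots,H_m\}$ denotes $\{\{G_1,\dots,G_n\}\mid\{H_1,\dots,H_m\}\}$. Relations $\le$ and $\lhd$ on games are defined by mutual recursion: $G\le H$ iff (1) every left option $G^L$ of $G$ satisfies $G^L\lhd H$, (2) every right option $H^R$ of $H$ satisfies $G\lhd H^R$, and (3) if $G$ or $H$ is atomic then $G\lhd H$. $G\lhd H$ iff (1) some right option $G^R$ of $G$ satisfies $G^R\le H$, or (2) some left option $H^L$ of $H$ satisfies $G\le H^L$, or (3) $G=[a]$, $H=[b]$ are atomic with $a\le b$ in $A$. *)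

(* Defs.v *)
From Stdlib Require Import List Arith.
Import ListNotations.

Section Games.
Variable A : Type.
Variable leA : A -> A -> Prop.

(* A game: atomic [a], or composite {L | R}. Option sets are represented by
   lists; all games used below have non-empty option lists. *)
Inductive game : Type :=
| Atom : A -> game
| Comp : list game -> list game -> game.

Definition leftopts (G : game) : list game :=
  match G with Atom _ => [] | Comp l _ => l end.
Definition rightopts (G : game) : list game :=
  match G with Atom _ => [] | Comp _ r => r end.
Definition atomic (G : game) : Prop :=
  match G with Atom _ => True | Comp _ _ => False end.

(* The mutually recursive relations <= and <| (well-founded recursion
   rendered as a mutual inductive definition). *)
Inductive game_le : game -> game -> Prop :=
| game_le_intro : forall G H,
    (forall GL, In GL (leftopts G) -> game_lf GL H) ->
    (forall HR, In HR (rightopts H) -> game_lf G HR) ->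
    ((atomic G \/ atomic H) -> game_lf G H) ->
    game_le G H
with game_lf : game -> game -> Prop :=
| game_lf_R : forall G H GR, In GR (rightopts G) -> game_le GR H -> game_lf G H
| game_lf_L : forall G H HL, In HL (leftopts H) -> game_le G HL -> game_lf G H
| game_lf_atom : forall a b, leA a b -> game_lf (Atom a) (Atom b).
End Games.

Arguments Atom {A}.
Arguments Comp {A}.

Inductive L5 : Type := m3 | m2 | m1 | z0 | p1.
Definition L5_val (x : L5) : nat :=
  match x with m3 => 0 | m2 => 1 | m1 => 2 | z0 => 3 | p1 => 4 end.
Definition L5_le (x y : L5) : Prop := L5_val x <= L5_val y.

Definition G5 := game L5.
Definition le5 : G5 -> G5 -> Prop := game_le L5 L5_le.

Definition star : G5 := Comp [Atom m1] [Atom m3].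
Definition Mg (G : G5) : G5 := Comp [Atom p1] [G].
Definition Pg (G : G5) : G5 := Comp [G] [Atom m2].
Definition Pstar (G : G5) : G5 := Comp [G] [star].
Definition Pn (n : nat) (G : G5) : G5 := if Nat.odd n then Pg G else Pstar G.

Fixpoint Gseq (n : nat) : G5 :=
  match n with
  | 0 => Atom z0
  | S k => Mg (Pn k (Gseq k))
  end.

(* Main.v *)
Require Import Defs.
From Stdlib Require Import List Arith Lia.
Import ListNotations.

Section R.
Variable A : Type.
Variable leA : A -> A -> Prop.
Hypothesis leA_refl : forall a, leA a a.

Fixpoint game_ind' (P : game A -> Prop) (Hat : forall a, P (Atom a))
  (Hc : forall l r, Forall P l -> Forall P r -> P (Comp l r)) (g : game A) : P g :=
  match g with
  | Atom a => Hat a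
  | Comp l r =>
      Hc l r
        ((fix F (l : list (game A)) : Forall P l :=
            match l with [] => Forall_nil _ | x :: t => Forall_cons _ (game_ind' P Hat Hc x) (F t) end) l)
        ((fix F (l : list (game A)) : Forall P l :=
            match l with [] => Forall_nil _ | x :: t => Forall_cons _ (game_ind' P Hat Hc x) (F t) end) r)
  end.

Lemma game_le_refl : forall g, game_le A leA g g.
Proof.
  apply game_ind'.
  - intro a. constructor; simpl; try tauto.
    intros _. apply game_lf_atom. apply leA_refl.
  - intros l r Hl Hr. constructor; simpl.
    + intros GL HGL. eapply game_lf_L; simpl; [exact HGL|].
      rewrite Forall_forall in Hl. auto.
    + intros HR HHR. eapply game_lf_R; simpl; [exact HHR|].
      rewrite Forall_forall in Hr. auto.
    + tauto.
Qed.
End R.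

Theorem lemma3p2 : forall n : nat, le5 (Gseq n) (Gseq (S n)).
Proof.
  assert (Hr : forall g, le5 g g).
  { intro g. apply game_le_refl. intro a. unfold L5_le. lia. }
  intros [|n].
  - simpl. constructor; simpl.
    + tauto.
    + intros HR [<-|[]]. unfold Pn; simpl.
      eapply game_lf_L; simpl; [left; reflexivity|]. apply Hr.
    + intros _. eapply game_lf_L; simpl; [left; reflexivity|].
      constructor; simpl; try tauto. intros _. apply game_lf_atom. unfold L5_le; simpl; lia.
  - change (le5 (Gseq (S n)) (Mg (Pn (S n) (Gseq (S n))))).
    destruct (Gseq (S n)) eqn:E.
    + simpl in E. discriminate.
    + simpl in E. injection E as <- <-.
      constructor; simpl.
      * intros GL [<-|[]]. eapply game_lf_L; simpl; [left; reflexivity|]. apply Hr.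
      * intros HR [<-|[]]. unfold Pn; destruct (Nat.odd (S n));
          (eapply game_lf_L; simpl; [left; reflexivity|]; apply Hr).
      * tauto.
Qed.
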